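(* Let $U\subset\mathbb{R}^u\times\mathbb{R}^s$ be a convex neighborhood of zero and let $f:U\to\mathbb{R}^u\times\mathbb{R}^s$ be a $C^1$ map with $f(0)=0$. Suppose that for $M>0$, $m\left[\frac{\partial f_{\mathrm x}}{\partial\mathrm x}(U)\right]-M\sup_{z\in U}\left\|\frac{\partial f_{\mathrm x}}{\partial\mathrm y}(z)\right\|\ge\xi$, $\sup_{z\in U}\left\{\left\|\frac{\partial f_{\mathrm y}}{\partial\mathrm y}(z)\right\|+\frac1M\left\|\frac{\partial f_{\mathrm y}}{\partial\mathrm x}(z)\right\|\right\}\le\mu$, and $\xi/\mu>1$. Then $f(J_u(0,M)\cap U)\subset\mathrm{int}\,J_u(0,M)\cup\{0\}$, where $J_u(0,M)=\{(\mathrm x,\mathrm y)\in\mathbb{R}^u\times\mathbb{R}^s:\|\mathrm y\|\le M\|\mathrm x\|\}$.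
   Context: Points of $\mathbb{R}^u\times\mathbb{R}^s$ are written $(\mathrm x,\mathrm y)$, $f=(f_{\mathrm x},f_{\mathrm y})$, norms Euclidean. For a linear map $A$, $m(A)=\max\{c:\|Av\|\ge c\|v\|\ \forall v\}$; for a set $\mathbf A$ of matrices, $m(\mathbf A)=\inf_{A\in\mathbf A}m(A)$. $[\partial f_{\mathrm x}/\partial\mathrm x(U)]$ is the interval enclosure: the set of matrices whose $(i,j)$ entry lies in $[\inf_{U}\partial f_{\mathrm x,i}/\partial\mathrm x_j,\sup_U\partial f_{\mathrm x,i}/\partial\mathrm x_j]$. *)

(* Defs.v *)
From HB Require Import structures.
From mathcomp Require Import all_boot all_order all_algebra.
From mathcomp Require Import all_classical all_reals all_analysis.
Set Implicit Arguments. Unset Strict Implicit. Unset Printing Implicit Defensive.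
Import Order.TTheory GRing.Theory Num.Theory.
Import numFieldNormedType.Exports.
Local Open Scope classical_set_scope.
Local Open Scope ring_scope.

Section Defs.
Variable R : realType.

Definition enorm (m n : nat) (A : 'M[R]_(m, n)) : R :=
  Num.sqrt (\sum_(i < m) \sum_(j < n) A i j ^+ 2).

Definition opnorm (m n : nat) (A : 'M[R]_(m, n)) : \bar R :=
  ereal_sup [set (enorm (A *m v))%:E | v in [set v : 'cV[R]_n | enorm v <= 1]].

Definition mnorm (m n : nat) (A : 'M[R]_(m, n)) : \bar R :=
  ereal_sup [set c%:E | c in [set c : R | forall v : 'cV[R]_n,
                                          c * enorm v <= enorm (A *m v)]].

Definition m_set (m n : nat) (S : set 'M[R]_(m, n)) : \bar R :=
  ereal_inf [set mnorm A | A in S].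

(* Jacobian matrix of f at z in the usual orientation:
   jac f z i j = d f_i / d z_j (z).  The library's [jacobian f z] acts on row
   vectors (v *m jacobian f z), so we transpose it. *)
Definition jac (n : nat) (f : 'rV[R]_n -> 'rV[R]_n) (z : 'rV[R]_n)
  : 'M[R]_n := (jacobian f z)^T.

Definition enclosure (n : nat) (U : set 'rV[R]_n)
  (m' n' : nat) (Q : 'rV[R]_n -> 'M[R]_(m', n')) : set 'M[R]_(m', n') :=
  [set A | forall i j,
     (ereal_inf [set (Q z i j)%:E | z in U] <= (A i j)%:E)%E /\
     ((A i j)%:E <= ereal_sup [set (Q z i j)%:E | z in U])%E].

Definition convex (n : nat) (U : set 'rV[R]_n) :=
  forall a b (t : R), U a -> U b -> 0 <= t <= 1 -> U ((1 - t) *: a + t *: b).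

Definition C1_on (n : nat) (U : set 'rV[R]_n) (f : 'rV[R]_n -> 'rV[R]_n) :=
  (forall z, U z -> differentiable f z) /\
  (forall i j, {within U, continuous (fun z => jac f z i j)}).

Definition cone_u (u s : nat) (M : R) : set 'rV[R]_(u + s) :=
  [set z | enorm (rsubmx z) <= M * enorm (lsubmx z)].

End Defs.

(* Main.v *)
Require Import Defs.
From HB Require Import structures.
From mathcomp Require Import all_boot all_order all_algebra.
From mathcomp Require Import all_classical all_reals all_analysis.
From mathcomp Require Import ring lra.
Import Order.TTheory GRing.Theory Num.Theory.
Import numFieldNormedType.Exports.
Local Open Scope classical_set_scope.
Local Open Scope ring_scope.

Set Implicit Arguments. Unset Strict Implicit. Unset Printing Implicit Defensive.

Section N.
Variable R : realType.

Definition nrm m (a : 'I_m -> R) := Num.sqrt (\sum_i a i ^+ 2).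

Lemma sumsq_ge0 m (a : 'I_m -> R) : 0 <= \sum_i a i ^+ 2.
Proof. by apply: sumr_ge0 => i _; exact: sqr_ge0. Qed.

Lemma nrm_ge0 m (a : 'I_m -> R) : 0 <= nrm a.
Proof. exact: sqrtr_ge0. Qed.

Lemma nrm_sq m (a : 'I_m -> R) : nrm a ^+ 2 = \sum_i a i ^+ 2.
Proof. by rewrite sqr_sqrtr // sumsq_ge0. Qed.

Lemma nrm_eq0 m (a : 'I_m -> R) : nrm a = 0 -> forall i, a i = 0.
Proof.
move=> h i; have : \sum_i a i ^+ 2 = 0 by rewrite -nrm_sq h expr0n.
move/eqP; rewrite psumr_eq0 => [/allP /(_ i)|j _]; last exact: sqr_ge0.
by rewrite mem_index_enum /= sqrf_eq0 => /(_ isT) /eqP.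
Qed.

Lemma CS m (a b : 'I_m -> R) : \sum_i a i * b i <= nrm a * nrm b.
Proof.
set na := nrm a; set nb := nrm b.
have key : 2 * (na * nb) * (\sum_i a i * b i) <= 2 * (na * nb) * (na * nb).
  have -> : 2 * (na * nb) * (na * nb) =
     \sum_i (nb ^+ 2 * a i ^+ 2 + na ^+ 2 * b i ^+ 2).
    by rewrite big_split /= -!mulr_sumr -!nrm_sq -/na -/nb; ring.
  rewrite mulr_sumr; apply: ler_sum => i _.
  have := sqr_ge0 (nb * a i - na * b i); nra.
have [h|h] := eqVneq (na * nb) 0.
  rewrite h; move/eqP: h; rewrite mulf_eq0 => /orP [] /eqP /nrm_eq0 h0.
    by rewrite big1 // => i _; rewrite h0 mul0r.
  by rewrite big1 // => i _; rewrite h0 mulr0.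
have pos : 0 < 2 * (na * nb).
  by rewrite mulr_gt0 // lt_def h mulr_ge0 // nrm_ge0.
by rewrite -(ler_pM2l pos).
Qed.

Lemma nrm_triangle m (a b : 'I_m -> R) :
  nrm (fun i => a i + b i) <= nrm a + nrm b.
Proof.
have -> : nrm a + nrm b = Num.sqrt ((nrm a + nrm b) ^+ 2).
  by rewrite sqrtr_sqr ger0_norm // addr_ge0 // nrm_ge0.
rewrite /nrm ler_sqrt; last by rewrite sqr_ge0.
have e : \sum_i (a i + b i) ^+ 2 =
   \sum_i a i ^+ 2 + 2 * \sum_i a i * b i + \sum_i b i ^+ 2.
  by rewrite mulr_sumr -!big_split /=; apply: eq_bigr => i _; ring.
rewrite e -/(nrm a) -/(nrm b) -!nrm_sq; have := CS a b; nra.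
Qed.

Lemma nrm_scale m c (a : 'I_m -> R) : nrm (fun i => c * a i) = `|c| * nrm a.
Proof.
rewrite /nrm (eq_bigr (fun i => c ^+ 2 * a i ^+ 2)); last by move=> i _; rewrite exprMn.
by rewrite -mulr_sumr sqrtrM ?sqr_ge0 // sqrtr_sqr.
Qed.

Lemma nrm_opp m (a : 'I_m -> R) : nrm (fun i => - a i) = nrm a.
Proof. by rewrite /nrm; congr Num.sqrt; apply: eq_bigr => i _; rewrite sqrrN. Qed.

Lemma enorm_row m (A : 'M[R]_(1, m)) : enorm A = nrm (fun j => A 0 j).
Proof. by rewrite /enorm big_ord1. Qed.

Lemma enorm_col m (A : 'M[R]_(m, 1)) : enorm A = nrm (fun i => A i 0).
Proof. by rewrite /enorm /nrm; congr Num.sqrt; apply: eq_bigr => i _; rewrite big_ord1. Qed.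

End N.

Section M.
Variable R : realType.

Lemma enorm_ge0 m n (A : 'M[R]_(m, n)) : 0 <= enorm A.
Proof. exact: sqrtr_ge0. Qed.

Lemma enorm_scale m n c (A : 'M[R]_(m, n)) : enorm (c *: A) = `|c| * enorm A.
Proof.
rewrite /enorm (eq_bigr (fun i => c ^+ 2 * \sum_j A i j ^+ 2)); last first.
  by move=> i _; rewrite mulr_sumr; apply: eq_bigr => j _; rewrite mxE exprMn.
rewrite -mulr_sumr sqrtrM ?sqr_ge0 // sqrtr_sqr //.
Qed.

Lemma enorm0 m n : enorm (0 : 'M[R]_(m, n)) = 0.
Proof.
rewrite /enorm big1 ?sqrtr0 // => i _; rewrite big1 // => j _; by rewrite mxE expr0n.
Qed.

Lemma enorm_eq0 m n (A : 'M[R]_(m, n)) : enorm A = 0 -> A = 0.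
Proof.
move=> h; have hs : \sum_i \sum_j A i j ^+ 2 = 0.
  move/eqP: h; rewrite sqrtr_eq0 => le; apply/eqP; rewrite eq_le le /=.
  by apply: sumr_ge0 => i _; apply: sumr_ge0 => j _; exact: sqr_ge0.
apply/matrixP => i j; rewrite mxE.
move/eqP: hs; rewrite psumr_eq0 => [/allP /(_ i)|k _]; last first.
  by apply: sumr_ge0 => ? _; exact: sqr_ge0.
rewrite mem_index_enum => /(_ isT) /implyP /(_ isT).
rewrite psumr_eq0 => [/allP /(_ j)|k _]; last exact: sqr_ge0.
by rewrite mem_index_enum => /(_ isT) /implyP /(_ isT); rewrite sqrf_eq0 => /eqP.
Qed.

Lemma mnorm_lb m n (A : 'M[R]_(m, n)) c : (c%:E <= mnorm A)%E ->
  forall v : 'cV[R]_n, c * enorm v <= enorm (A *m v).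
Proof.
move=> h v; rewrite leNgt; apply/negP => hlt.
have vpos : 0 < enorm v.
  rewrite lt_def enorm_ge0 andbT; apply/eqP => e; move: hlt.
  by rewrite e mulr0 ltNge enorm_ge0.
have : (mnorm A <= (enorm (A *m v) / enorm v)%:E)%E.
  apply: ge_ereal_sup => _ [c' hc' <-]; rewrite lee_fin.
  by rewrite ler_pdivlMr // hc'.
move=> /(le_trans h); rewrite lee_fin ler_pdivlMr // leNgt.
by rewrite hlt.
Qed.

Lemma opnorm_ub m n (B : 'M[R]_(m, n)) r : (opnorm B <= r%:E)%E ->
  forall v : 'cV[R]_n, enorm (B *m v) <= r * enorm v.
Proof.
move=> h v; have [e|ne] := eqVneq (enorm v) 0.
  by rewrite (enorm_eq0 e) mulmx0 !enorm0 mulr0.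
have vpos : 0 < enorm v by rewrite lt_def ne enorm_ge0.
set w := (enorm v)^-1 *: v.
have ew : enorm w <= 1.
  by rewrite /w enorm_scale ger0_norm ?invr_ge0 ?enorm_ge0 // mulVf.
have : ((enorm (B *m w))%:E <= opnorm B)%E.
  by apply: ereal_sup_ubound; exists w.
move=> /le_trans /(_ h); rewrite lee_fin /w -scalemxAr enorm_scale.
by rewrite ger0_norm ?invr_ge0 ?enorm_ge0 // mulrC ler_pdivrMr.
Qed.

Lemma opnorm_ge0 m n (B : 'M[R]_(m, n)) : (0 <= opnorm B)%E.
Proof.
apply: ereal_sup_ubound; exists 0; last by rewrite mulmx0 enorm0.
by rewrite /= enorm0.
Qed.

End M.

Section I.
Variable R : realType.
Notation mu := (@lebesgue_measure R).
Notation I01 := ([set` `[(0:R), 1]] : set R).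
Definition cw (g : R -> R) := {within I01, continuous g}.
Definition Int (g : R -> R) := \int[mu]_(t in I01) g t.

Lemma cw_int g : cw g -> mu.-integrable I01 (EFin \o g).
Proof. by move=> h; apply: continuous_compact_integrable => //; exact: segment_compact. Qed.

Lemma cwD f g : cw f -> cw g -> cw (fun t => f t + g t).
Proof. by move=> cf cg x; apply: cvgD; [exact: cf|exact: cg]. Qed.

Lemma cwM f g : cw f -> cw g -> cw (fun t => f t * g t).
Proof. by move=> cf cg x; apply: cvgM; [exact: cf|exact: cg]. Qed.

Lemma cwC c : cw (fun _ => c).
Proof. by move=> x; exact: cvg_cst. Qed.

Lemma cw_sum (I : Type) (s : seq I) (F : I -> R -> R) :
  (forall i, cw (F i)) -> cw (fun t => \sum_(i <- s) F i t).
Proof.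
move=> h; elim: s => [|a s IH].
  under eq_fun do rewrite big_nil; exact: cwC.
under eq_fun do rewrite big_cons; exact: cwD.
Qed.

Lemma mu01 : mu I01 = 1%E.
Proof. by rewrite lebesgue_measure_itv /= lte_fin ltr01 oppr0 adde0. Qed.

Lemma Int_cst c : Int (fun _ => c) = c.
Proof. by rewrite /Int Rintegral_cst // [X in fine X]lebesgue_measure_itv /= lte_fin ltr01 /= subr0 mulr1. Qed.

Lemma IntD f g : cw f -> cw g -> Int (fun t => f t + g t) = Int f + Int g.
Proof. by move=> cf cg; rewrite /Int RintegralD //; exact: cw_int. Qed.

Lemma IntZl c f : cw f -> Int (fun t => c * f t) = c * Int f.
Proof. by move=> cf; rewrite /Int RintegralZl //; exact: cw_int. Qed.

Lemma Int_le f g : cw f -> cw g -> (forall t, I01 t -> f t <= g t) -> Int f <= Int g.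
Proof. by move=> cf cg h; apply: le_Rintegral => //; exact: cw_int. Qed.

Lemma Int_sum (I : Type) (s : seq I) (F : I -> R -> R) :
  (forall i, cw (F i)) -> Int (fun t => \sum_(i <- s) F i t) = \sum_(i <- s) Int (F i).
Proof.
move=> h; elim: s => [|a s IH].
  rewrite big_nil; under eq_fun do rewrite big_nil; exact: Int_cst.
rewrite big_cons -IH -IntD //; last exact: cw_sum.
by congr Int; apply: funext => t; rewrite big_cons.
Qed.

Lemma VI m (G : 'I_m -> R -> R) K : (forall i, cw (G i)) ->
  (forall t, I01 t -> nrm (fun i => G i t) <= K) ->
  nrm (fun i => Int (G i)) <= K.
Proof.
move=> cG hK; set v := fun i => Int (G i).
have K0 : 0 <= K.
  apply: le_trans (hK 0 _); [exact: nrm_ge0|by rewrite /= in_itv /= lexx ler01].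
have key : nrm v ^+ 2 <= nrm v * K.
  rewrite nrm_sq.
  have -> : \sum_i v i ^+ 2 = Int (fun t => \sum_i v i * G i t).
    rewrite Int_sum => [|i]; last by apply: cwM; [exact: cwC|exact: cG].
    by apply: eq_bigr => i _; rewrite IntZl // expr2.
  rewrite -[_ * K]Int_cst; apply: Int_le.
  - by apply: cw_sum => i; by apply: cwM; [exact: cwC|exact: cG].
  - exact: cwC.
  move=> t ht; apply: le_trans (CS _ _) _.
  by apply: ler_wpM2l; [exact: nrm_ge0|exact: hK].
have [e|ne] := eqVneq (nrm v) 0; first by rewrite e.
have vpos : 0 < nrm v by rewrite lt_def ne nrm_ge0.
by move: key; rewrite expr2 ler_pM2l.
Qed.

End I.

Section F.
Variable R : realType.
Lemma FTC01 (F g : R -> R) : cw g ->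
  (forall t, 0 < t < 1 -> derivable F t 1 /\ derive1 F t = g t) ->
  {for 0, continuous F} -> {for 1, continuous F} -> Int g = F 1 - F 0.
Proof.
move=> cg hd c0 c1; rewrite /Int /Rintegral (@continuous_FTC2 _ g F 0 1 ltr01 cg) //.
- split.
  + by move=> t; rewrite in_itv /= => /hd [].
  + exact: cvg_at_right_filter.
  + exact: cvg_at_left_filter.
- by move=> t; rewrite in_itv /= => /hd [].
Qed.
End F.

Section E.
Variable R : realType.
Local Notation I01 := ([set` `[(0:R), 1]] : set R).

Lemma I01_0 : I01 0. Proof. by rewrite /= in_itv /= lexx ler01. Qed.

Lemma Int_ge_e (e : \bar R) g : cw g -> (forall t, I01 t -> (e <= (g t)%:E)%E) ->
  (e <= (Int g)%:E)%E.
Proof.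
move=> cg h; case: e h => [r| |] h.
- rewrite lee_fin -[r]Int_cst; apply: Int_le; [exact: cwC|exact: cg|].
  by move=> t /h; rewrite lee_fin.
- by have := h 0 I01_0; rewrite ?leye_eq ?leeNy_eq.
- exact: leNye.
Qed.

Lemma Int_le_e (e : \bar R) g : cw g -> (forall t, I01 t -> ((g t)%:E <= e)%E) ->
  ((Int g)%:E <= e)%E.
Proof.
move=> cg h; case: e h => [r| |] h.
- rewrite lee_fin -[r]Int_cst; apply: Int_le; [exact: cg|exact: cwC|].
  by move=> t /h; rewrite lee_fin.
- exact: leey.
- by have := h 0 I01_0; rewrite ?leye_eq ?leeNy_eq.
Qed.

Lemma eb_Sx (m S : \bar R) (M xi : R) : 0 < M -> (0 <= S)%E ->
  (xi%:E <= m - M%:E * S)%E -> exists r, S = r%:E /\ 0 <= r /\ ((xi + M * r)%:E <= m)%E.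
Proof.
move=> M0; case: S => [r| |] hS h.
- exists r; split => //; split; first by rewrite -lee_fin.
  by rewrite EFinD EFinM -leeBrDr.
- by move: h; rewrite gt0_muley ?lte_fin // addeNy.
- by [].
Qed.

Lemma eb_mu (a b : \bar R) k mu : (0 <= a)%E -> (0 <= b)%E -> 0 < k ->
  (a + k%:E * b <= mu%:E)%E ->
  exists d c, a = d%:E /\ b = c%:E /\ 0 <= d /\ 0 <= c /\ d + k * c <= mu.
Proof.
move=> + + k0; case: a => [d| |] ha; case: b => [c| |] hb //= h.
- exists d, c; split; first by []. split; first by [].
  split; first by rewrite -lee_fin. split; first by rewrite -lee_fin.
  by rewrite -lee_fin EFinD EFinM.
- by move: h; rewrite gt0_muley ?lte_fin // addey.
- by move: h; rewrite gt0_muley ?lte_fin // addye.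
Qed.
End E.

Lemma within_comp_cont (T1 T2 T3 : topologicalType) (A : set T1) (B : set T2)
  (p : T1 -> T2) (h : T2 -> T3) :
 {within B, continuous h} -> continuous p -> (forall x, A x -> B (p x)) ->
 {within A, continuous (h \o p)}.
Proof.
move=> hc pc pAB; apply/subspace_continuousP => x Ax.
have hcv := (subspace_continuousP _ h).1 hc (p x) (pAB x Ax).
apply: cvg_comp hcv.
move=> W /=; rewrite !nbhs_simpl /within /= => hW.
have := pc x _ hW; rewrite nbhs_simpl /=.
by apply: filterS => t hB At; apply: hB; exact: pAB.
Qed.

Section S. Variable R : realType.
Lemma deriv_comp n (f : 'rV[R]_n -> 'rV[R]_n) (z : 'rV[R]_n) (k : 'I_n) (t : R) :
  differentiable f (t *: z) ->
  [/\ derivable (fun t : R => f (t *: z) 0 k) t 1,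
  derive1 (fun t : R => f (t *: z) 0 k) t = \sum_j jac f (t *: z) k j * z 0 j &
  {for t, continuous (fun t : R => f (t *: z) 0 k)}].
Proof.
move=> df.
have dp : differentiable (fun s : R => s *: z) t by [].
have dpv : 'd (fun s : R => s *: z) t = (fun s : R => s *: z) :> (R -> _) by rewrite diff_val.
have dG : differentiable (f \o (fun s : R => s *: z)) t by apply: differentiable_comp.
have dH : differentiable ((fun w : 'rV[R]_n => w 0 k) \o (f \o (fun s : R => s *: z))) t.
  by apply: differentiable_comp => //; exact: differentiable_coord.
split; first exact: diff_derivable.
  have @cL : {linear 'rV[R]_n -> R}.
    by exists (fun N : 'rV[R]_n => N 0 k); do 2![eexists]; do ?[constructor];
       rewrite ?mxE// => ? *; rewrite ?mxE//; move=> ?; rewrite !mxE.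
  have cLc : continuous cL by exact: coord_continuous.
  rewrite derive1E deriveE //.
  rewrite (_ : (fun t0 : R => f (t0 *: z) 0 k) = cL \o (f \o (fun s : R => s *: z))) //.
  rewrite diff_comp //; last by apply: linear_differentiable.
  rewrite /= (diff_lin _ cLc) /= diff_comp //= dpv /= scale1r -deriveE //.
  rewrite deriveEjacobian // mxE; apply: eq_bigr => j _.
  by rewrite /jac /jacobian !mxE mulrC.
exact: differentiable_continuous dH.
Qed.
End S.

Section Aux.
Variable R : realType.

Lemma enorm_mulcol m n (A : 'M[R]_(m, n)) (v : 'cV[R]_n) :
  enorm (A *m v) = nrm (fun i => \sum_j A i j * v j 0).
Proof. by rewrite enorm_col; congr nrm; apply: funext => i; rewrite mxE. Qed.

Lemma enorm_trrow n (w : 'rV[R]_n) : enorm w^T = nrm (fun j => w 0 j).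
Proof. by rewrite enorm_col; congr nrm; apply: funext => i; rewrite mxE. Qed.

Lemma cont_sum (T : topologicalType) (I : Type) (s : seq I) (F : I -> T -> R) :
  (forall i, continuous (F i)) -> continuous (fun w => \sum_(i <- s) F i w).
Proof.
move=> h; elim: s => [|a s IH].
  under eq_fun do rewrite big_nil; exact: cst_continuous.
under eq_fun do rewrite big_cons; move=> x; apply: cvgD; [exact: h|exact: IH].
Qed.

Lemma cont_enorm m n p q (g : 'M[R]_(m, n) -> 'M[R]_(p, q)) :
  (forall i j, continuous (fun w => g w i j)) -> continuous (fun w => enorm (g w)).
Proof.
move=> h w; apply: (continuous_comp _ (@sqrt_continuous R _)).
apply: cont_sum => i; apply: cont_sum => j.
under eq_fun do rewrite expr2.
exact: (fun x => cvgM (h i j x) (h i j x)).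
Qed.

End Aux.

Notation I01R R := ([set` `[(0:R), 1]] : set R).

Unset Implicit Arguments. Set Strict Implicit. Set Printing Implicit Defensive.

Theorem theorem4p1 (R : realType) (u s : nat)
  (U : set 'rV[R]_(u + s)) (f : 'rV[R]_(u + s) -> 'rV[R]_(u + s))
  (M xi mu : R) :
  convex U -> nbhs (0 : 'rV[R]_(u + s)) U ->
  C1_on U f -> f 0 = 0 ->
  0 < M ->
  (m_set (enclosure U (fun z => ulsubmx (jac f z)))
     - M%:E * ereal_sup [set opnorm (ursubmx (jac f z)) | z in U]
     >= xi%:E)%E ->
  (ereal_sup [set (opnorm (drsubmx (jac f z))
                   + (M^-1)%:E * opnorm (dlsubmx (jac f z)))%E | z in U]
     <= mu%:E)%E ->
  xi / mu > 1 ->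
  f @` (@cone_u R u s M `&` U) `<=` interior (@cone_u R u s M) `|` [set 0].
Proof.
move=> hconv hU [hdiff hcont] f0 M0 hm hmu hxm _ [z [zc zU] <-].
have U0 : U 0 := nbhs_singleton hU.
have seg : forall t, I01R R t -> U (t *: z).
  move=> t; rewrite /= in_itv /= => tt.
  by have := hconv 0 z t U0 zU tt; rewrite scaler0 add0r.
set x := fun j => z 0 (lshift s j).
set y := fun j => z 0 (rshift u j).
have ex : enorm (lsubmx z) = nrm x.
  by rewrite enorm_row; congr nrm; apply: funext => j; rewrite mxE.
have ey : enorm (rsubmx z) = nrm y.
  by rewrite enorm_row; congr nrm; apply: funext => j; rewrite mxE.
have zc' : nrm y <= M * nrm x by rewrite -ex -ey; exact: zc.
have [x0|xne] := eqVneq (nrm x) 0.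
  right; rewrite /=.
  have y0 : nrm y = 0.
    by apply/le_anti; rewrite nrm_ge0 andbT; move: zc'; rewrite x0 mulr0.
  rewrite -(hsubmxK z) (enorm_eq0 (etrans ex x0)) (enorm_eq0 (etrans ey y0)).
  by rewrite row_mx0.
have xpos : 0 < nrm x by rewrite lt_def xne nrm_ge0.
left.
pose g k t := \sum_j jac f (t *: z) k j * z 0 j.
have cJ : forall k j, cw (fun t => jac f (t *: z) k j).
  move=> k j; exact: (within_comp_cont (hcont k j) (@scalel_continuous R _ z) seg).
have cg : forall k, cw (g k).
  by move=> k; apply: cw_sum => j; apply: cwM; [exact: cJ|exact: cwC].
have fzk : forall k, f z 0 k = Int (g k).
  move=> k; rewrite (@FTC01 _ (fun t => f (t *: z) 0 k) (g k) (cg k)).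
  - by rewrite scale1r scale0r f0 mxE subr0.
  - move=> t /andP[t0 t1]; have [] := @deriv_comp R _ f z k t; last by [].
      by apply: hdiff; apply: seg; rewrite /= in_itv /= !ltW.
  - have [] // := @deriv_comp R _ f z k 0.
    by apply: hdiff; apply: seg; exact: I01_0.
  - have [] // := @deriv_comp R _ f z k 1.
    by apply: hdiff; apply: seg; rewrite /= in_itv /= lexx ler01.
have gsplit : forall k t, g k t =
    \sum_(j < u) jac f (t *: z) k (lshift s j) * x j +
    \sum_(j < s) jac f (t *: z) k (rshift u j) * y j.
  by move=> k t; rewrite /g big_split_ord.
pose a i j := Int (fun t => jac f (t *: z) (lshift s i) (lshift s j)).
pose hh i t := \sum_(j < s) jac f (t *: z) (lshift s i) (rshift u j) * y j.
pose ax i := \sum_(j < u) a i j * x j.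
have chh : forall i, cw (hh i).
  by move=> i; apply: cw_sum => j; apply: cwM; [exact: cJ|exact: cwC].
have fxE : forall i, f z 0 (lshift s i) = ax i + Int (hh i).
  move=> i; rewrite fzk.
  have -> : g (lshift s i) = (fun t =>
      \sum_(j < u) jac f (t *: z) (lshift s i) (lshift s j) * x j + hh i t).
    by apply: funext => t; rewrite gsplit.
  rewrite IntD //; last by apply: cw_sum => j; apply: cwM; [exact: cJ|exact: cwC].
  congr (_ + _); rewrite Int_sum; last by move=> j; apply: cwM; [exact: cJ|exact: cwC].
  apply: eq_bigr => j _; rewrite /a mulrC -IntZl; last exact: cJ.
  by congr Int; apply: funext => t; rewrite mulrC.
pose A : 'M[R]_u := \matrix_(i, j) a i j.
have Aenc : enclosure U (fun w => ulsubmx (jac f w)) A.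
  move=> i j; rewrite mxE; split.
  - apply: Int_ge_e; first exact: cJ.
    move=> t ht; apply: ereal_inf_lbound; exists (t *: z); first exact: seg.
    by rewrite !mxE.
  - apply: Int_le_e; first exact: cJ.
    move=> t ht; apply: ereal_sup_ubound; exists (t *: z); first exact: seg.
    by rewrite !mxE.
set Sx := ereal_sup _ in hm.
have Sx0 : (0 <= Sx)%E.
  apply: le_trans (opnorm_ge0 (ursubmx (jac f 0))) _.
  by apply: ereal_sup_ubound; exists 0.
have [r [Sxr [r0 hr]]] := eb_Sx M0 Sx0 hm.
have mA : ((xi + M * r)%:E <= mnorm A)%E.
  apply: le_trans hr _; apply: ereal_inf_lbound; by exists A.
have hAx : (xi + M * r) * nrm x <= nrm ax.
  have := mnorm_lb mA (lsubmx z)^T; rewrite enorm_trrow enorm_mulcol.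
  have -> : (fun j => lsubmx z 0 j) = x by apply: funext => j; rewrite mxE.
  have -> // : (fun i => \sum_j A i j * (lsubmx z)^T j 0) = ax.
  by apply: funext => i; apply: eq_bigr => j _; rewrite !mxE.
have hIh : nrm (fun i => Int (hh i)) <= r * nrm y.
  apply: VI => // t ht.
  have hop : (opnorm (ursubmx (jac f (t *: z))) <= r%:E)%E.
    by rewrite -Sxr; apply: ereal_sup_ubound; exists (t *: z) => //; exact: seg.
  have := opnorm_ub hop (rsubmx z)^T; rewrite enorm_trrow enorm_mulcol.
  have -> : (fun j => rsubmx z 0 j) = y by apply: funext => j; rewrite mxE.
  have -> // : (fun i => \sum_j ursubmx (jac f (t *: z)) i j * (rsubmx z)^T j 0)
     = (fun i => hh i t).
  by apply: funext => i; apply: eq_bigr => j _; rewrite !mxE.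
set fx := fun i => f z 0 (lshift s i).
have hfx : xi * nrm x <= nrm fx.
  have tri := nrm_triangle fx (fun i => - Int (hh i)).
  rewrite nrm_opp in tri.
  have e : (fun i => fx i + - Int (hh i)) = ax.
    by apply: funext => i; rewrite /fx fxE addrK.
  rewrite e in tri.
  have : r * nrm y <= r * (M * nrm x) by apply: ler_wpM2l.
  nra.
have Minv : 0 < M^-1 by rewrite invr_gt0.
have bnd : forall w, U w -> exists d c,
    opnorm (drsubmx (jac f w)) = d%:E /\ opnorm (dlsubmx (jac f w)) = c%:E /\
    0 <= d /\ 0 <= c /\ d + M^-1 * c <= mu.
  move=> w Uw; apply: eb_mu; [exact: opnorm_ge0|exact: opnorm_ge0|exact: Minv|].
  by apply: le_trans hmu; apply: ereal_sup_ubound; exists w.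
have mu0 : 0 <= mu.
  have [d [c [_ [_ [d0 [c0 h]]]]]] := bnd 0 U0.
  by apply: le_trans h; apply: addr_ge0 => //; apply: mulr_ge0 => //; exact: ltW.
have mupos : 0 < mu.
  rewrite lt_def mu0 andbT; apply/eqP => e; move: hxm; rewrite e invr0 mulr0.
  by rewrite ltr10.
have ximu : mu < xi by move: hxm; rewrite ltr_pdivlMr // mul1r.
set fy := fun i => f z 0 (rshift u i).
have hfy : nrm fy <= M * mu * nrm x.
  have -> : fy = (fun i => Int (g (rshift u i))).
    by apply: funext => i; rewrite /fy fzk.
  apply: VI => // t ht.
  have [d [c [hd [hc [d0 [c0 hdc]]]]]] := bnd _ (seg t ht).
  pose cx i := \sum_(j < u) jac f (t *: z) (rshift u i) (lshift s j) * x j.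
  pose dy i := \sum_(j < s) jac f (t *: z) (rshift u i) (rshift u j) * y j.
  have e : (fun i => g (rshift u i) t) = (fun i => cx i + dy i).
    by apply: funext => i; rewrite gsplit.
  rewrite e; apply: le_trans (nrm_triangle cx dy) _.
  have hcx : nrm cx <= c * nrm x.
    have hcle : (opnorm (dlsubmx (jac f (t *: z))) <= c%:E)%E by rewrite hc.
    have := opnorm_ub hcle (lsubmx z)^T; rewrite enorm_trrow enorm_mulcol.
    have -> : (fun j => lsubmx z 0 j) = x by apply: funext => j; rewrite mxE.
    have -> // : (fun i => \sum_j dlsubmx (jac f (t *: z)) i j * (lsubmx z)^T j 0)
       = cx.
    by apply: funext => i; apply: eq_bigr => j _; rewrite !mxE.
  have hdy : nrm dy <= d * nrm y.
    have hdle : (opnorm (drsubmx (jac f (t *: z))) <= d%:E)%E by rewrite hd.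
    have := opnorm_ub hdle (rsubmx z)^T; rewrite enorm_trrow enorm_mulcol.
    have -> : (fun j => rsubmx z 0 j) = y by apply: funext => j; rewrite mxE.
    have -> // : (fun i => \sum_j drsubmx (jac f (t *: z)) i j * (rsubmx z)^T j 0)
       = dy.
    by apply: funext => i; apply: eq_bigr => j _; rewrite !mxE.
  have cM : c = M * (M^-1 * c) by rewrite mulrA divff ?mul1r // gt_eqF.
  set c' := M^-1 * c in cM hdc.
  have : d * nrm y <= d * (M * nrm x) by apply: ler_wpM2l.
  have : 0 <= (M * nrm x) * (mu - (d + c')).
    by apply: mulr_ge0; [apply: mulr_ge0; [exact: ltW|exact: nrm_ge0]|rewrite subr_ge0].
  rewrite cM in hcx; lra.
pose phi (w : 'rV[R]_(u + s)) := M * enorm (lsubmx w) - enorm (rsubmx w).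
have cl : continuous (fun w : 'rV[R]_(u + s) => enorm (lsubmx w)).
  apply: cont_enorm => i j.
  have -> : (fun w : 'rV[R]_(u + s) => lsubmx w i j) = (fun w => w i (lshift s j)).
    by apply: funext => w; rewrite mxE.
  exact: coord_continuous.
have cr : continuous (fun w : 'rV[R]_(u + s) => enorm (rsubmx w)).
  apply: cont_enorm => i j.
  have -> : (fun w : 'rV[R]_(u + s) => rsubmx w i j) = (fun w => w i (rshift u j)).
    by apply: funext => w; rewrite mxE.
  exact: coord_continuous.
have cphi : continuous phi.
  by move=> w; exact: (cvgB (cvgM (cvg_cst M) (cl w)) (cr w)).
have php : 0 < phi (f z).
  have el : enorm (lsubmx (f z)) = nrm fx.
    by rewrite enorm_row; congr nrm; apply: funext => j; rewrite mxE.
  have er : enorm (rsubmx (f z)) = nrm fy.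
    by rewrite enorm_row; congr nrm; apply: funext => j; rewrite mxE.
  rewrite /phi el er.
  have : M * (mu * nrm x) < M * (xi * nrm x).
    by rewrite ltr_pM2l // ltr_pM2r.
  have : M * (xi * nrm x) <= M * nrm fx by rewrite ler_pM2l.
  lra.
have := cvgr_gt _ (cphi (f z)) _ php.
move=> hn; rewrite /interior /=.
have hn' : nbhs (f z) [set w : 'rV[R]_(u + s) | 0 < phi w] by apply: hn; exact: nbhs_filter.
apply: filterS hn' => w.
rewrite /phi /cone_u /= => h.
lra.
Qed.
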